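(* There exists a topologically mixing homeomorphism of a compact metric space that has the L-shadowing property and has no periodic points.
   Context: L-shadowing for a homeomorphism $f$ of a compact metric space $(X,d)$: for every $\varepsilon>0$ there is $\delta>0$ such that every sequence $(x_k)_{k\in\mathbb{Z}}$ with $d(f(x_k),x_{k+1})\le\delta$ for all $k$ and $d(f(x_k),x_{k+1})\to0$ as $|k|\to\infty$ admits $z\in X$ with $d(f^k(z),x_k)\le\varepsilon$ for all $k$ and $d(f^k(z),x_k)\to0$ as $|k|\to\infty$. $f$ is topologically mixing if for all nonempty open $U,V$ there is $n>0$ with $f^k(U)\cap V\ne\emptyset$ for all $k\ge n$. *)

(* Defs.v *)
From Stdlib Require Import Reals ZArith List.
Open Scope R_scope.

Definition is_metric {X : Type} (d : X -> X -> R) : Prop :=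
  (forall x y, 0 <= d x y) /\
  (forall x y, d x y = 0 <-> x = y) /\
  (forall x y, d x y = d y x) /\
  (forall x y z, d x z <= d x y + d y z).

Definition is_open {X : Type} (d : X -> X -> R) (U : X -> Prop) : Prop :=
  forall x, U x -> exists r, 0 < r /\ forall y, d x y < r -> U y.

Definition compact_metric {X : Type} (d : X -> X -> R) : Prop :=
  forall (I : Type) (U : I -> X -> Prop),
    (forall i, is_open d (U i)) ->
    (forall x, exists i, U i x) ->
    exists l : list I, forall x, exists i, In i l /\ U i x.

Definition continuous {X : Type} (d : X -> X -> R) (f : X -> X) : Prop :=
  forall x eps, 0 < eps -> exists delta, 0 < delta /\
    forall y, d x y < delta -> d (f x) (f y) < eps.

Definition homeomorphism {X : Type} (d : X -> X -> R) (f g : X -> X) : Prop :=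
  continuous d f /\ continuous d g /\
  (forall x, g (f x) = x) /\ (forall x, f (g x) = x).

Fixpoint iter {X : Type} (n : nat) (f : X -> X) (x : X) : X :=
  match n with O => x | S m => f (iter m f x) end.

Definition iterZ {X : Type} (f g : X -> X) (k : Z) (x : X) : X :=
  if (0 <=? k)%Z then iter (Z.to_nat k) f x else iter (Z.to_nat (- k)) g x.

Definition tends_to_0_Z (a : Z -> R) : Prop :=
  forall eps, 0 < eps -> exists N : Z, forall k, (N <= Z.abs k)%Z -> Rabs (a k) < eps.

Definition topologically_mixing {X : Type} (d : X -> X -> R) (f : X -> X) : Prop :=
  forall U V : X -> Prop, is_open d U -> is_open d V ->
    (exists u, U u) -> (exists v, V v) ->
    exists n : nat, (0 < n)%nat /\
      forall k : nat, (n <= k)%nat -> exists x, U x /\ V (iter k f x).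

Definition L_shadowing {X : Type} (d : X -> X -> R) (f g : X -> X) : Prop :=
  forall eps, 0 < eps -> exists delta, 0 < delta /\
    forall xs : Z -> X,
      (forall k, d (f (xs k)) (xs (k + 1)%Z) <= delta) ->
      tends_to_0_Z (fun k => d (f (xs k)) (xs (k + 1)%Z)) ->
      exists z, (forall k, d (iterZ f g k z) (xs k) <= eps) /\
                tends_to_0_Z (fun k => d (iterZ f g k z) (xs k)).

Definition no_periodic_points {X : Type} (f : X -> X) : Prop :=
  forall (x : X) (n : nat), (0 < n)%nat -> iter n f x <> x.

(* Main.v *)
Require Import Defs.
From Stdlib Require Import Reals ZArith List Lia Lra Classical ClassicalEpsilon FunctionalExtensionality ProofIrrelevance.

Definition MM (m : nat) : Z := (Z.of_nat m + 1)%Z.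
Lemma MM_pos m : (0 < MM m)%Z. Proof. unfold MM; lia. Qed.
Lemma MM_nz m : MM m <> 0%Z. Proof. unfold MM; lia. Qed.

Record P := mkP { lab : nat -> Z; bits : nat -> Z -> bool;
  labok : forall m, (0 <= lab m < MM m)%Z }.

Definition b2z (b : bool) : Z := if b then 1%Z else 0%Z.

Lemma P_ext (x y : P) : (forall m, lab x m = lab y m) -> (forall m j, bits x m j = bits y m j) -> x = y.
Proof.
  destruct x as [l1 b1 o1], y as [l2 b2 o2]; simpl; intros H1 H2.
  assert (l1 = l2) by (apply functional_extensionality; auto). subst l2.
  assert (b1 = b2) by (apply functional_extensionality; intro m; apply functional_extensionality; auto).
  subst b2. f_equal. apply proof_irrelevance.
Qed.

Definition modok (a : nat -> Z) : forall m, (0 <= a m mod MM m < MM m)%Z :=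
  fun m => Z.mod_pos_bound _ _ (MM_pos m).

Definition fP (x : P) : P :=
  mkP (fun m => ((lab x m + 1 + b2z (bits x m 0)) mod MM m)%Z) (fun m j => bits x m (j+1)%Z)
      (modok _).
Definition gP (x : P) : P :=
  mkP (fun m => ((lab x m - 1 - b2z (bits x m (-1))) mod MM m)%Z) (fun m j => bits x m (j-1)%Z)
      (modok _).

Lemma gf x : gP (fP x) = x.
Proof.
  apply P_ext; simpl.
  - intro m. replace (-1+1)%Z with 0%Z by lia.
    replace (((lab x m + 1 + b2z (bits x m 0)) mod MM m) - 1 - b2z (bits x m 0))%Z
      with (((lab x m + 1 + b2z (bits x m 0)) mod MM m) + (- 1 - b2z (bits x m 0)))%Z by ring.
    rewrite Z.add_mod_idemp_l by apply MM_nz.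
    replace (lab x m + 1 + b2z (bits x m 0) + (- 1 - b2z (bits x m 0)))%Z with (lab x m) by ring.
    apply Z.mod_small, labok.
  - intros m j. f_equal. lia.
Qed.

Lemma fg x : fP (gP x) = x.
Proof.
  apply P_ext; simpl.
  - intro m. replace (0-1)%Z with (-1)%Z by lia.
    replace (((lab x m - 1 - b2z (bits x m (-1))) mod MM m) + 1 + b2z (bits x m (-1)))%Z
      with (((lab x m - 1 - b2z (bits x m (-1))) mod MM m) + (1 + b2z (bits x m (-1))))%Z by ring.
    rewrite Z.add_mod_idemp_l by apply MM_nz.
    replace (lab x m - 1 - b2z (bits x m (-1)) + (1 + b2z (bits x m (-1))))%Z with (lab x m) by ring.
    apply Z.mod_small, labok.
  - intros m j. f_equal. lia.
Qed.

Inductive crd := CL (m : nat) | CB (m : nat) (j : Z).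
Definition cval (c : crd) (x : P) : Z :=
  match c with CL m => lab x m | CB m j => b2z (bits x m j) end.
Definition lvl (c : crd) : nat :=
  match c with CL m => m | CB m j => Nat.max m (Z.to_nat (Z.abs j)) end.

Definition agree (n : nat) (x y : P) : Prop :=
  forall c, (lvl c < n)%nat -> cval c x = cval c y.

Lemma b2z_inj a b : b2z a = b2z b -> a = b.
Proof. destruct a, b; simpl; congruence. Qed.

Lemma agree_lab n x y m : agree n x y -> (m < n)%nat -> lab x m = lab y m.
Proof. intros H Hm. apply (H (CL m)). simpl; lia. Qed.
Lemma agree_bits n x y m j : agree n x y -> (m < n)%nat -> (Z.abs j < Z.of_nat n)%Z -> bits x m j = bits y m j.
Proof. intros H Hm Hj. apply b2z_inj, (H (CB m j)). simpl; lia. Qed.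
Lemma agree_intro n x y :
  (forall m, (m < n)%nat -> lab x m = lab y m) ->
  (forall m j, (m < n)%nat -> (Z.abs j < Z.of_nat n)%Z -> bits x m j = bits y m j) -> agree n x y.
Proof. intros H1 H2 [m|m j]; simpl; intro H. apply H1; lia. f_equal; apply H2; lia. Qed.

Lemma agree0 x y : agree 0 x y.
Proof. intros c H; lia. Qed.
Lemma agree_refl n x : agree n x x.
Proof. intros c _; auto. Qed.
Lemma agree_sym n x y : agree n x y -> agree n y x.
Proof. intros H c Hc; symmetry; auto. Qed.
Lemma agree_trans n x y z : agree n x y -> agree n y z -> agree n x z.
Proof. intros H1 H2 c Hc; rewrite H1; auto. Qed.
Lemma agree_mono n n' x y : (n' <= n)%nat -> agree n x y -> agree n' x y.
Proof. intros Hn H c Hc; apply H; lia. Qed.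
Lemma agree_all x y : (forall n, agree n x y) -> x = y.
Proof.
  intro H. apply P_ext.
  - intro m. apply (agree_lab (S m)); auto.
  - intros m j. apply (agree_bits (S (Nat.max m (Z.to_nat (Z.abs j))))); auto. lia.
    rewrite Nat2Z.inj_succ, Nat2Z.inj_max, Z2Nat.id by lia. lia.
Qed.

Definition hp (n : nat) : R := (/2)^n.
Lemma hp_pos n : (0 < hp n)%R. Proof. apply pow_lt; lra. Qed.
Lemma hp_S n : hp (S n) = (/2 * hp n)%R. Proof. reflexivity. Qed.
Lemma hp_le a b : (a <= b)%nat -> (hp b <= hp a)%R.
Proof.
  intro H; induction H. lra. rewrite hp_S. pose proof (hp_pos m); lra.
Qed.
Lemma hp_lt a b : (a < b)%nat -> (hp b < hp a)%R.
Proof.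
  intro H. apply Rle_lt_trans with (hp (S a)). apply hp_le; lia.
  rewrite hp_S. pose proof (hp_pos a); lra.
Qed.
Lemma hp_le_inv a b : (hp b <= hp a)%R -> (a <= b)%nat.
Proof. intro H. destruct (le_lt_dec a b); auto. apply hp_lt in l; lra. Qed.
Lemma hp_small r : (0 < r)%R -> exists n, (hp n < r)%R.
Proof.
  intro Hr. destruct (pow_lt_1_zero (/2)) with r as [N HN]; auto.
  rewrite Rabs_pos_eq; lra. exists N. specialize (HN N (le_n _)).
  rewrite Rabs_pos_eq in HN; auto. left; apply hp_pos.
Qed.

Lemma agree_level x y : ~ (forall n, agree n x y) -> exists k, agree k x y /\ ~ agree (S k) x y.
Proof.
  intro H. apply NNPP; intro H2. apply H. intro n; induction n. apply agree0.
  apply NNPP; intro H3. apply H2; eauto.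
Qed.

Definition pdist (x y : P) : R :=
  match excluded_middle_informative (forall n, agree n x y) with
  | left _ => 0%R
  | right H => hp (proj1_sig (constructive_indefinite_description _ (agree_level x y H)))
  end.

Lemma pdist_cases x y : (pdist x y = 0 /\ forall n, agree n x y)%R \/
   exists k, pdist x y = hp k /\ agree k x y /\ ~ agree (S k) x y.
Proof.
  unfold pdist. destruct excluded_middle_informative. left; auto.
  destruct constructive_indefinite_description as [k Hk]; simpl. right; eauto.
Qed.

Lemma pdist_le x y n : (pdist x y <= hp n)%R <-> agree n x y.
Proof.
  destruct (pdist_cases x y) as [[-> H]|[k [-> [H1 H2]]]].
  - split; auto. intros _; left; apply hp_pos.
  - split; intro H.
    + apply hp_le_inv in H. eapply agree_mono; eauto.
    + apply hp_le. destruct (le_lt_dec n k); auto. exfalso; apply H2. eapply agree_mono; eauto.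
Qed.

Lemma pdist_lt x y n : (pdist x y < hp n)%R -> agree (S n) x y.
Proof.
  destruct (pdist_cases x y) as [[-> H]|[k [-> [H1 H2]]]]; auto.
  intro H. destruct (le_lt_dec k n). pose proof (hp_le _ _ l); lra.
  eapply agree_mono; eauto.
Qed.

Lemma pdist_nonneg x y : (0 <= pdist x y)%R.
Proof. destruct (pdist_cases x y) as [[-> H]|[k [-> _]]]. lra. left; apply hp_pos. Qed.

Lemma pdist_eq_ext x y x' y' : (forall n, agree n x y -> agree n x' y') -> (pdist x' y' <= pdist x y)%R.
Proof.
  intro H. destruct (pdist_cases x y) as [[-> H0]|[k [-> [H1 H2]]]].
  - destruct (pdist_cases x' y') as [[-> _]|[k [_ [_ H2]]]]. lra. exfalso; apply H2; auto.
  - apply pdist_le; auto.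
Qed.

Lemma pdist_metric : is_metric pdist.
Proof.
  split; [|split; [|split]].
  - apply pdist_nonneg.
  - intros x y; split.
    + intro H. apply agree_all. intro n. apply pdist_le. rewrite H; left; apply hp_pos.
    + intros <-. destruct (pdist_cases x x) as [[-> _]|[k [_ [_ H2]]]]; auto.
      exfalso; apply H2, agree_refl.
  - intros x y. apply Rle_antisym; apply pdist_eq_ext; intros; apply agree_sym; auto.
  - intros x y z.
    pose proof (pdist_nonneg x y) as N1; pose proof (pdist_nonneg y z) as N2.
    destruct (pdist_cases x y) as [[-> H]|[a [Ha [Ha1 _]]]].
    { rewrite (agree_all _ _ H). lra. }
    destruct (pdist_cases y z) as [[-> H']|[b [Hb [Hb1 _]]]].
    { rewrite <- (agree_all _ _ H'). lra. }
    destruct (le_lt_dec a b).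
    + assert (pdist x z <= hp a)%R. apply pdist_le. apply agree_trans with y; auto.
      apply agree_mono with b; auto. lra.
    + assert (pdist x z <= hp b)%R. apply pdist_le. apply agree_trans with y; auto.
      apply agree_mono with a; auto; lia. lra.
Qed.

Lemma f_agree n x y : agree (S n) x y -> agree n (fP x) (fP y).
Proof.
  intro H. apply agree_intro; simpl.
  - intros m Hm. rewrite (agree_lab _ _ _ m H), (agree_bits _ _ _ m 0 H); auto; lia.
  - intros m j Hm Hj. apply (agree_bits _ _ _ m _ H); lia.
Qed.
Lemma g_agree n x y : agree (S n) x y -> agree n (gP x) (gP y).
Proof.
  intro H. apply agree_intro; simpl.
  - intros m Hm. rewrite (agree_lab _ _ _ m H), (agree_bits _ _ _ m (-1) H); auto; lia.
  - intros m j Hm Hj. apply (agree_bits _ _ _ m _ H); lia.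
Qed.

Lemma cont_of (h : P -> P) : (forall n x y, agree (S n) x y -> agree n (h x) (h y)) -> continuous pdist h.
Proof.
  intros Hh x eps He. destruct (hp_small eps He) as [n Hn].
  exists (hp n); split. apply hp_pos. intros y Hy.
  apply pdist_lt in Hy. apply Hh in Hy. apply pdist_le in Hy. lra.
Qed.

Lemma homeo : homeomorphism pdist fP gP.
Proof.
  split; [|split; [|split]].
  - apply cont_of, f_agree.
  - apply cont_of, g_agree.
  - apply gf.
  - apply fg.
Qed.

Open Scope Z_scope.

Fixpoint RS (p : Z) (n : nat) (b : Z -> bool) : Z :=
  match n with O => 0 | S n => RS p n b + b2z (b (p + Z.of_nat n)) end.
Definition Sz (k : Z) (b : Z -> bool) : Z :=
  if (0 <=? k) then RS 0 (Z.to_nat k) b else - RS k (Z.to_nat (-k)) b.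

Lemma b2z_bound b : 0 <= b2z b <= 1. Proof. destruct b; simpl; lia. Qed.

Lemma RS_bound p n b : 0 <= RS p n b <= Z.of_nat n.
Proof. induction n; cbn [RS]. lia. rewrite Nat2Z.inj_succ. pose proof (b2z_bound (b (p + Z.of_nat n))). lia. Qed.

Lemma RS_shift p n b : RS p (S n) b = b2z (b p) + RS (p+1) n b.
Proof.
  induction n. cbn [RS]. rewrite Z.add_0_r. ring.
  cbn [RS] in *. rewrite IHn.
  replace (p + 1 + Z.of_nat n) with (p + Z.of_nat (S n)) by lia. ring.
Qed.

Lemma RS_ext p n b b' : (forall i, (i < n)%nat -> b (p + Z.of_nat i) = b' (p + Z.of_nat i)) -> RS p n b = RS p n b'.
Proof. induction n; simpl; intros H; auto. rewrite IHn, H; auto. Qed.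

Lemma Sz_zero b : Sz 0 b = 0. Proof. reflexivity. Qed.

Lemma Sz_succ k b : Sz (k+1) b = Sz k b + b2z (b k).
Proof.
  unfold Sz. destruct (0 <=? k) eqn:E.
  - apply Z.leb_le in E. destruct (0 <=? k+1) eqn:E2; [|apply Z.leb_gt in E2; lia].
    rewrite Z2Nat.inj_add by lia. rewrite Nat.add_comm. simpl.
    rewrite Z2Nat.id by lia. f_equal. 
  - apply Z.leb_gt in E. destruct (Z.to_nat (-k)) as [|n] eqn:En. lia.
    rewrite RS_shift.
    destruct (0 <=? k+1) eqn:E2.
    + apply Z.leb_le in E2. assert (k = -1) by lia. subst. simpl in En. 
      assert (n = 0%nat) by lia. subst. simpl. lia.
    + apply Z.leb_gt in E2. replace (Z.to_nat (-(k+1))) with n by lia. lia.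
Qed.

Lemma Sz_range p n b : Sz (p + Z.of_nat n) b = Sz p b + RS p n b.
Proof.
  induction n. simpl. rewrite Z.add_0_r. lia.
  rewrite Nat2Z.inj_succ, <- Z.add_1_r, Z.add_assoc, Sz_succ, IHn. simpl. lia.
Qed.

Lemma RS_count p n b t : 0 <= t -> (forall i, (i < n)%nat -> b (p + Z.of_nat i) = (Z.of_nat i <? t)) ->
  RS p n b = Z.min (Z.of_nat n) t.
Proof.
  intros Ht; induction n; simpl; intros H. lia.
  rewrite IHn by auto. rewrite H by lia. destruct (Z.of_nat n <? t) eqn:E; simpl.
  apply Z.ltb_lt in E; lia. apply Z.ltb_ge in E; lia.
Qed.

Lemma iterZ_0 (x : P) : iterZ fP gP 0 x = x. Proof. reflexivity. Qed.

Lemma iterZ_succ k x : iterZ fP gP (k+1) x = fP (iterZ fP gP k x).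
Proof.
  unfold iterZ. destruct (0 <=? k) eqn:E.
  - apply Z.leb_le in E. destruct (0 <=? k+1) eqn:E2; [|apply Z.leb_gt in E2; lia].
    rewrite Z2Nat.inj_add by lia. rewrite Nat.add_comm. reflexivity.
  - apply Z.leb_gt in E. destruct (Z.to_nat (-k)) as [|n] eqn:En. lia. simpl.
    rewrite fg. destruct (0 <=? k+1) eqn:E2.
    + apply Z.leb_le in E2. assert (k = -1) by lia. subst. simpl in En.
      assert (n = 0%nat) by lia. subst. reflexivity.
    + apply Z.leb_gt in E2. replace (Z.to_nat (-(k+1))) with n by lia. reflexivity.
Qed.

Lemma iterZ_nat n x : iterZ fP gP (Z.of_nat n) x = Defs.iter n fP x.
Proof. unfold iterZ. destruct (0 <=? Z.of_nat n) eqn:E. rewrite Nat2Z.id; auto. apply Z.leb_gt in E; lia. Qed.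

Lemma Zind2 (Q : Z -> Prop) : Q 0 -> (forall k, Q k -> Q (k+1)) -> (forall k, Q (k+1) -> Q k) -> forall k, Q k.
Proof.
  intros H0 H1 H2. apply Z.peano_ind; auto.
  - intros k Hk. apply H2. replace (Z.pred k + 1) with k by lia. auto.
Qed.

Lemma T_bits k x m j : bits (iterZ fP gP k x) m j = bits x m (j + k).
Proof.
  revert j. induction k using Zind2; intro j.
  - rewrite iterZ_0. f_equal; lia.
  - rewrite iterZ_succ. simpl. rewrite IHk. f_equal; lia.
  - specialize (IHk (j - 1)). rewrite iterZ_succ in IHk. simpl in IHk.
    replace (j - 1 + 1) with j in IHk by lia. rewrite IHk. f_equal; lia.
Qed.

Lemma mod_back a c b M : 0 <= a < M -> b = (a + c) mod M -> a = (b - c) mod M.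
Proof.
  intros Ha ->. rewrite Zminus_mod_idemp_l. replace (a + c - c) with a by ring.
  rewrite Z.mod_small; auto.
Qed.

Lemma mod_idl A B m : ((A mod MM m) + B) mod MM m = (A + B) mod MM m.
Proof. apply Z.add_mod_idemp_l, MM_nz. Qed.

Lemma T_lab k x m : lab (iterZ fP gP k x) m = (lab x m + k + Sz k (bits x m)) mod MM m.
Proof.
  induction k using Zind2.
  - rewrite iterZ_0, Sz_zero. rewrite Z.mod_small. ring. pose proof (labok x m); lia.
  - rewrite iterZ_succ. simpl. rewrite IHk, T_bits, Sz_succ.
    rewrite <- Z.add_assoc, mod_idl. f_equal. replace (0 + k) with k by lia. ring.
  - rewrite iterZ_succ in IHk. simpl in IHk. rewrite T_bits, Sz_succ in IHk.
    rewrite <- Z.add_assoc in IHk. symmetry in IHk.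
    apply mod_back in IHk. 2: apply labok. rewrite IHk. rewrite Zminus_mod_idemp_l.
    f_equal. replace (0 + k) with k by lia. ring.
Qed.

Lemma nopp : no_periodic_points fP.
Proof.
  intros x n Hn H. rewrite <- iterZ_nat in H.
  set (m := (2*n)%nat).
  assert (E := f_equal (fun y => lab y m) H). cbv beta in E.
  rewrite T_lab in E. pose proof (labok x m) as Hl.
  pose proof (RS_bound 0 n (bits x m)) as Hr.
  unfold Sz in E. destruct (0 <=? Z.of_nat n) eqn:Eb; [|apply Z.leb_gt in Eb; lia].
  rewrite Nat2Z.id in E.
  assert (HM : MM m = 2 * Z.of_nat n + 1) by (unfold MM, m; rewrite Nat2Z.inj_mul; lia).
  rewrite HM in E, Hl.
  pose proof (Z.div_mod (lab x m + Z.of_nat n + RS 0 n (bits x m)) (2 * Z.of_nat n + 1) ltac:(lia)) as Hd.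
  rewrite E in Hd.
  set (q := (lab x m + Z.of_nat n + RS 0 n (bits x m)) / (2 * Z.of_nat n + 1)) in Hd.
  destruct (Z_le_gt_dec q 0); nia.
Qed.

Close Scope Z_scope.

Definition Good (I : Type) (U : I -> P -> Prop) (Q : P -> Prop) : Prop :=
  exists l : list I, forall x, Q x -> exists i, In i l /\ U i x.

Lemma good_mono I U (Q Q' : P -> Prop) : (forall x, Q' x -> Q x) -> Good I U Q -> Good I U Q'.
Proof. intros H [l Hl]. exists l. intros x Hx; apply Hl, H, Hx. Qed.

Definition vals (c : crd) : list Z :=
  match c with CL m => map Z.of_nat (seq 0 (S m)) | CB _ _ => (0 :: 1 :: nil)%Z end.

Lemma vals_in c x : In (cval c x) (vals c).
Proof.
  destruct c as [m|m j]; unfold vals, cval.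
  - apply in_map_iff. exists (Z.to_nat (lab x m)). pose proof (labok x m). unfold MM in H.
    split. apply Z2Nat.id; lia. apply in_seq. lia.
  - destruct (bits x m j); simpl; auto.
Qed.

Lemma good_union I U (Q : P -> Prop) (h : P -> Z) V :
  (forall v, In v V -> Good I U (fun x => Q x /\ h x = v)) -> Good I U (fun x => Q x /\ In (h x) V).
Proof.
  induction V as [|v V IH]; intro H.
  - exists nil. intros x [_ []].
  - destruct (H v (or_introl eq_refl)) as [l1 H1].
    destruct IH as [l2 H2]. intros w Hw; apply H; right; auto.
    exists (l1 ++ l2). intros x [Hq [Hx|Hx]].
    + destruct (H1 x) as [i [Hi Hu]]; auto. exists i; split; auto. apply in_or_app; auto.
    + destruct (H2 x) as [i [Hi Hu]]; auto. exists i; split; auto. apply in_or_app; auto.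
Qed.

Lemma bad_split I U (Q : P -> Prop) c : ~ Good I U Q -> exists v, ~ Good I U (fun x => Q x /\ cval c x = v).
Proof.
  intro H. apply NNPP; intro H2. apply H.
  apply good_mono with (fun x => Q x /\ In (cval c x) (vals c)).
  intros x Hx; split; auto; apply vals_in.
  apply good_union. intros v _. apply NNPP; intro H3. apply H2; eauto.
Qed.

Lemma bad_nonempty I U (Q : P -> Prop) : ~ Good I U Q -> exists y, Q y.
Proof. intro H. apply NNPP; intro H2. apply H. exists nil. intros x Hx; exfalso; eauto. Qed.

Lemma refine I U ds : forall (Q : P -> Prop), ~ Good I U Q ->
  exists y, Q y /\ ~ Good I U (fun x => Q x /\ forall c, In c ds -> cval c x = cval c y).
Proof.
  induction ds as [|c ds IH]; intros Q H.
  - destruct (bad_nonempty _ _ _ H) as [y Hy]. exists y; split; auto.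
    intro H2. apply H. revert H2. apply good_mono. intros x Hx; split; auto. intros c [].
  - destruct (bad_split _ _ _ c H) as [v Hv].
    destruct (IH _ Hv) as [y [[Hy1 Hy2] Hy3]]. exists y; split; auto.
    intro H2. apply Hy3. revert H2. apply good_mono. intros x [[Hx1 Hx2] Hx3].
    split; auto. intros c' [<-|Hc']; auto. congruence.
Qed.

Definition zr (n : nat) : list Z := map Z.of_nat (seq 0 n) ++ map (fun i => - Z.of_nat i)%Z (seq 0 n).
Definition coords (n : nat) : list crd :=
  map CL (seq 0 n) ++ flat_map (fun m => map (CB m) (zr n)) (seq 0 n).

Lemma coords_in c n : (lvl c < n)%nat -> In c (coords n).
Proof.
  unfold coords. intro H. apply in_or_app. destruct c as [m|m j]; simpl in H.
  - left. apply in_map. apply in_seq. lia.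
  - right. apply in_flat_map. exists m. split. apply in_seq; lia.
    apply in_map. unfold zr. apply in_or_app. destruct (Z_le_gt_dec 0 j).
    + left. apply in_map_iff. exists (Z.to_nat j). split. apply Z2Nat.id; lia. apply in_seq. lia.
    + right. apply in_map_iff. exists (Z.to_nat (-j)). split. rewrite Z2Nat.id; lia. apply in_seq. lia.
Qed.

Definition Cyl (n : nat) (y : P) : P -> Prop := fun x => agree n y x.

Lemma step I U n y : ~ Good I U (Cyl n y) -> exists y', agree n y y' /\ ~ Good I U (Cyl (S n) y').
Proof.
  intro H. destruct (refine I U (coords (S n)) _ H) as [y' [Hy1 Hy2]].
  exists y'; split; auto. intro H2. apply Hy2. revert H2. apply good_mono.
  intros x [Hx1 Hx2]. intros c Hc. symmetry. apply Hx2, coords_in, Hc.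
Qed.

Definition nxt (I : Type) (U : I -> P -> Prop) (n : nat) (y : P) : P :=
  match excluded_middle_informative (exists y', agree n y y' /\ ~ Good I U (Cyl (S n) y')) with
  | left H => proj1_sig (constructive_indefinite_description _ H)
  | right _ => y end.

Definition pt0 : P := mkP (fun _ => 0%Z) (fun _ _ => false) (fun m => conj (Z.le_refl 0) (MM_pos m)).

Fixpoint ys (I : Type) (U : I -> P -> Prop) (n : nat) : P :=
  match n with O => pt0 | S n => nxt I U n (ys I U n) end.

Lemma ys_prop I U : ~ Good I U (Cyl 0 pt0) -> forall n,
  ~ Good I U (Cyl n (ys I U n)) /\ agree n (ys I U n) (ys I U (S n)).
Proof.
  intros H0 n. induction n.
  - split; auto. apply agree0.
  - destruct IHn as [H1 _].
    assert (Hb : ~ Good I U (Cyl (S n) (ys I U (S n)))).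
    { simpl. unfold nxt. destruct excluded_middle_informative as [He|He].
      destruct constructive_indefinite_description as [y' [Hy0 Hy']]; simpl; auto.
      exfalso; apply He, step, H1. }
    split; auto. destruct (step _ _ _ _ Hb) as [y' Hy'].
    change (ys I U (S (S n))) with (nxt I U (S n) (ys I U (S n))). unfold nxt.
    destruct excluded_middle_informative as [He|He].
    destruct constructive_indefinite_description as [y'' [Hy'' Hy1]]; simpl; auto.
    exfalso; apply He; eauto.
Qed.

Lemma compact : compact_metric pdist.
Proof.
  intros I U Hopen Hcover. apply NNPP; intro Hno.
  assert (H0 : ~ Good I U (Cyl 0 pt0)).
  { intros [l Hl]. apply Hno. exists l. intro x. apply Hl, agree0. }
  pose proof (ys_prop I U H0) as HP.
  assert (chain : forall p q, (p <= q)%nat -> agree p (ys I U p) (ys I U q)).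
  { intros p q Hpq. induction Hpq. apply agree_refl.
    apply agree_trans with (ys I U m); auto. apply agree_mono with m; auto. apply HP. }
  set (xl := mkP (fun m => lab (ys I U (S m)) m) (fun m j => bits (ys I U (S (lvl (CB m j)))) m j)
                 (fun m => labok (ys I U (S m)) m)).
  assert (Hxl : forall n, agree n xl (ys I U n)).
  { intros n [m|m j] Hc.
    - exact (chain (S m) n ltac:(simpl in *; lia) (CL m) ltac:(simpl; lia)).
    - exact (chain (S (lvl (CB m j))) n ltac:(simpl in *; lia) (CB m j) ltac:(lia)). }
  destruct (Hcover xl) as [i Hi]. destruct (Hopen i xl Hi) as [r [Hr Hball]].
  destruct (hp_small r Hr) as [n Hn].
  apply (proj1 (HP n)). exists (i :: nil). intros x Hx. exists i; split. left; auto.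
  apply Hball. assert (pdist xl x <= hp n)%R. apply pdist_le. apply agree_trans with (ys I U n); auto.
  lra.
Qed.

Open Scope Z_scope.

Lemma RS_or p n b1 b2 : (forall i, (i < n)%nat -> ~ (b1 (p + Z.of_nat i) = true /\ b2 (p + Z.of_nat i) = true)) ->
  RS p n (fun j => orb (b1 j) (b2 j)) = RS p n b1 + RS p n b2.
Proof.
  induction n; intro H; cbn [RS]. lia. rewrite IHn by auto.
  specialize (H n (Nat.lt_succ_diag_r n)).
  destruct (b1 (p + Z.of_nat n)), (b2 (p + Z.of_nat n)); simpl in *; try tauto; lia.
Qed.

Lemma RS_split p a b bb : RS p (a + b) bb = RS p a bb + RS (p + Z.of_nat a) b bb.
Proof.
  induction b. rewrite Nat.add_0_r. cbn [RS]. ring.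
  rewrite Nat.add_succ_r. cbn [RS]. rewrite IHb. rewrite Nat2Z.inj_add. rewrite Z.add_assoc. ring.
Qed.

Lemma Sz_nat k b : Sz (Z.of_nat k) b = RS 0 k b.
Proof. pose proof (Sz_range 0 k b). simpl in H. rewrite H. reflexivity. Qed.

Lemma mix_cyl n u v k : (3*n+1 <= k)%nat ->
  exists x, agree n u x /\ agree n v (iterZ fP gP (Z.of_nat k) x).
Proof.
  intro Hk. set (K := Z.of_nat k). set (nn := Z.of_nat n).
  set (b0 := fun m j => if (m <? n)%nat then (if Z.abs j <? nn then bits u m j
           else if Z.abs (j - K) <? nn then bits v m (j - K) else false) else bits u m j).
  set (tt := fun m => (lab v m - lab u m - K - RS 0 k (b0 m)) mod MM m).
  set (c := fun m j => andb (andb (m <? n)%nat (nn <=? j)) (j <? nn + tt m)).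
  set (x := mkP (lab u) (fun m j => orb (b0 m j) (c m j)) (labok u)).
  assert (Htt : forall m, 0 <= tt m < MM m) by (intro; apply Z.mod_pos_bound, MM_pos).
  assert (Hc : forall m j, c m j = true -> (m < n)%nat /\ nn <= j < nn + tt m).
  { intros m j H. unfold c in H. apply andb_prop in H as [H H3]. apply andb_prop in H as [H1 H2].
    apply Nat.ltb_lt in H1. apply Z.leb_le in H2. apply Z.ltb_lt in H3. auto. }
  assert (Hdisj : forall m j, ~ (b0 m j = true /\ c m j = true)).
  { intros m j [H1 H2]. apply Hc in H2 as [Hm Hj]. pose proof (Htt m). unfold MM in *.
    unfold b0 in H1. apply Nat.ltb_lt in Hm. rewrite Hm in H1. apply Nat.ltb_lt in Hm.
    destruct (Z.abs j <? nn) eqn:E1. apply Z.ltb_lt in E1; lia.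
    destruct (Z.abs (j - K) <? nn) eqn:E2. apply Z.ltb_lt in E2; unfold K, nn in *; lia. discriminate. }
  exists x. split.
  - apply agree_intro; simpl; auto. intros m j Hm Hj.
    assert (c m j = false). { destruct (c m j) eqn:E; auto. apply Hc in E; unfold nn in *; lia. }
    rewrite H. unfold b0. apply Nat.ltb_lt in Hm. rewrite Hm. apply Z.ltb_lt in Hj. fold nn in Hj. rewrite Hj.
    symmetry; apply Bool.orb_false_r.
  - apply agree_intro.
    + intros m Hm. rewrite T_lab. simpl. fold K. unfold K at 2. rewrite Sz_nat.
      rewrite RS_or by (intros; apply Hdisj).
      assert (RS 0 k (c m) = tt m).
      { replace k with (n + (k - n))%nat by lia. rewrite RS_split.
        assert (E0 : RS 0 n (c m) = Z.min (Z.of_nat n) 0).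
        { apply RS_count. lia. intros i Hi.
          replace (Z.of_nat i <? 0) with false by (symmetry; apply Z.ltb_ge; lia).
          destruct (c m (0 + Z.of_nat i)) eqn:E; auto.
          apply Hc in E. unfold nn in E. lia. }
        rewrite E0.
        rewrite (RS_count _ _ (c m) (tt m)); [| apply Htt |].
        - pose proof (Htt m). unfold MM in *. lia.
        - intros i Hi. unfold c. apply Nat.ltb_lt in Hm. rewrite Hm. simpl.
          destruct (Z.of_nat i <? tt m) eqn:E3; [apply Z.ltb_lt in E3 | apply Z.ltb_ge in E3].
          + apply andb_true_intro; split; [apply Z.leb_le | apply Z.ltb_lt]; unfold nn; lia.
          + apply Bool.andb_false_intro2; apply Z.ltb_ge; unfold nn; lia. }
      rewrite H. unfold tt.
      replace (lab u m + K + (RS 0 k (b0 m) + (lab v m - lab u m - K - RS 0 k (b0 m)) mod MM m))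
        with ((lab u m + K + RS 0 k (b0 m)) + (lab v m - lab u m - K - RS 0 k (b0 m)) mod MM m) by ring.
      rewrite Z.add_mod_idemp_r by apply MM_nz.
      replace (lab u m + K + RS 0 k (b0 m) + (lab v m - lab u m - K - RS 0 k (b0 m))) with (lab v m) by ring.
      symmetry; apply Z.mod_small, labok.
    + intros m j Hm Hj. rewrite T_bits. simpl.
      assert (c m (j + K) = false).
      { destruct (c m _) eqn:E; auto. apply Hc in E. pose proof (Htt m). unfold MM, nn, K in *. lia. }
      rewrite H, Bool.orb_false_r. unfold b0. apply Nat.ltb_lt in Hm. rewrite Hm.
      fold K. destruct (Z.abs (j + K) <? nn) eqn:E1. apply Z.ltb_lt in E1; unfold K, nn in *; lia.
      replace (j + K - K) with j by ring. fold nn in Hj. apply Z.ltb_lt in Hj. rewrite Hj. auto.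
Qed.

Lemma open_cyl U u : is_open pdist U -> U u -> exists n, forall y, agree n u y -> U y.
Proof.
  intros Ho Hu. destruct (Ho u Hu) as [r [Hr Hb]]. destruct (hp_small r Hr) as [n Hn].
  exists n. intros y Hy. apply Hb. apply pdist_le in Hy. lra.
Qed.

Lemma mixing : topologically_mixing pdist fP.
Proof.
  intros U V HU HV [u Hu] [v Hv].
  destruct (open_cyl U u HU Hu) as [n1 H1]. destruct (open_cyl V v HV Hv) as [n2 H2].
  set (n := Nat.max n1 n2). exists (3*n+1)%nat. split. lia.
  intros k Hk. destruct (mix_cyl n u v k Hk) as [x [Hx1 Hx2]].
  exists x. split. apply H1. apply agree_mono with n; auto; lia.
  rewrite <- iterZ_nat. apply H2. apply agree_mono with n; auto; lia.
Qed.

Close Scope Z_scope.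

Open Scope Z_scope.
Lemma bits_eq2 (xs : Z -> P) a b m p q : a = b -> p = q -> bits (xs a) m p = bits (xs b) m q.
Proof. intros -> ->; auto. Qed.
Lemma bits_eq1 (x : P) m p q : p = q -> bits x m p = bits x m q.
Proof. intros ->; auto. Qed.
Ltac feq := first [apply bits_eq2; lia | apply bits_eq1; lia].

Lemma chain_f (xs : Z -> P) l m k (jn : nat) : (m < l)%nat ->
  (forall i, k <= i < k + Z.of_nat jn -> agree l (fP (xs i)) (xs (i+1))) ->
  forall p, 0 <= p -> p + Z.of_nat jn < Z.of_nat l ->
  bits (xs (k + Z.of_nat jn)) m p = bits (xs k) m (p + Z.of_nat jn).
Proof.
  intros Hm. induction jn; intros H p Hp Hpl.
  - feq.
  - replace (k + Z.of_nat (S jn)) with ((k + Z.of_nat jn) + 1) by lia.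
    rewrite <- (agree_bits _ _ _ m p (H (k + Z.of_nat jn) ltac:(lia))) by lia.
    simpl. rewrite IHjn; [| intros; apply H; lia | lia | lia]. feq.
Qed.

Lemma chain_b (xs : Z -> P) l m k (jn : nat) : (m < l)%nat ->
  (forall i, k - Z.of_nat jn <= i < k -> agree l (fP (xs i)) (xs (i+1))) ->
  forall p, p <= 0 -> - p + Z.of_nat jn < Z.of_nat l ->
  bits (xs (k - Z.of_nat jn)) m p = bits (xs k) m (p - Z.of_nat jn).
Proof.
  intros Hm. induction jn; intros H p Hp Hpl.
  - feq.
  - set (i := k - Z.of_nat (S jn)).
    pose proof (agree_bits _ _ _ m (p - 1) (H i ltac:(unfold i; lia)) Hm ltac:(lia)) as E.
    simpl in E. replace (p - 1 + 1) with p in E by ring.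
    rewrite E. replace (i + 1) with (k - Z.of_nat jn) by (unfold i; lia).
    rewrite IHjn; [| intros; apply H; lia | lia | lia]. feq.
Qed.

Lemma chain (xs : Z -> P) l m k j : (m < l)%nat -> Z.abs j < Z.of_nat l ->
  (forall i, Z.min k (k + j) <= i < Z.max k (k + j) -> agree l (fP (xs i)) (xs (i+1))) ->
  bits (xs (k + j)) m 0 = bits (xs k) m j.
Proof.
  intros Hm Hj H. destruct (Z_le_gt_dec 0 j).
  - pose proof (chain_f xs l m k (Z.to_nat j) Hm) as C. rewrite Z2Nat.id in C by lia.
    rewrite C; [feq | | lia | lia]. intros i Hi; apply H; lia.
  - pose proof (chain_b xs l m k (Z.to_nat (-j)) Hm) as C. rewrite Z2Nat.id in C by lia.
    replace (k + j) with (k - - j) by ring.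
    rewrite C; [feq | | lia | lia]. intros i Hi; apply H; lia.
Qed.

Definition Exact (xs : Z -> P) m k : Prop :=
  lab (xs (k+1)) m = (lab (xs k) m + 1 + b2z (bits (xs k) m 0)) mod MM m.

Lemma exact_of (xs : Z -> P) l m k : (m < l)%nat -> agree l (fP (xs k)) (xs (k+1)) -> Exact xs m k.
Proof. intros Hm H. unfold Exact. rewrite <- (agree_lab _ _ _ m H Hm). reflexivity. Qed.

Definition zbp (xs : Z -> P) (Km : nat -> Z) m j : bool :=
  if andb (- Km m <=? j) (j <? Km m)
  then (j + Km m <? (lab (xs (Km m)) m - lab (xs (- Km m)) m - 2 * Km m) mod MM m)
  else bits (xs j) m 0.
Definition zA (xs : Z -> P) (Km : nat -> Z) m : Z :=
  lab (xs (- Km m)) m + Km m - Sz (- Km m) (zbp xs Km m).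
Definition zpt (xs : Z -> P) (Km : nat -> Z) : P :=
  mkP (fun m => zA xs Km m mod MM m) (zbp xs Km) (modok (zA xs Km)).

Lemma zbp_out xs Km m j : (j < - Km m \/ Km m <= j) -> zbp xs Km m j = bits (xs j) m 0.
Proof.
  intro H. unfold zbp. destruct (- Km m <=? j) eqn:E1, (j <? Km m) eqn:E2; simpl; auto.
  apply Z.leb_le in E1; apply Z.ltb_lt in E2; lia.
Qed.

Lemma z_labs xs Km m : 0 <= Km m -> (Km m = 0 \/ Z.of_nat m + 1 <= Km m) ->
  lab (iterZ fP gP (- Km m) (zpt xs Km)) m = lab (xs (- Km m)) m /\
  lab (iterZ fP gP (Km m) (zpt xs Km)) m = lab (xs (Km m)) m.
Proof.
  intros H0 H1. set (K := Km m). fold K in H0, H1.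
  set (L := lab (xs (- K)) m). set (L' := lab (xs K) m).
  set (tm := (L' - L - 2 * K) mod MM m).
  assert (Htm : 0 <= tm <= 2 * K).
  { destruct H1 as [H1|H1].
    - unfold tm, L, L'. rewrite H1. change (-0) with 0. replace (lab (xs 0) m - lab (xs 0) m - 2 * 0) with 0 by ring.
      rewrite Z.mod_0_l by apply MM_nz. lia.
    - pose proof (Z.mod_pos_bound (L' - L - 2 * K) (MM m) (MM_pos m)). unfold MM in *. fold tm in H. lia. }
  assert (HS : Sz K (zbp xs Km m) = Sz (- K) (zbp xs Km m) + tm).
  { assert (E : K = - K + Z.of_nat (Z.to_nat (2 * K))) by (rewrite Z2Nat.id; lia).
    rewrite E at 1. rewrite Sz_range. f_equal.
    rewrite (RS_count _ _ _ tm). rewrite Z2Nat.id by lia. lia. lia.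
    intros i Hi. unfold zbp. fold K.
    assert (Hi' : Z.of_nat i < 2 * K) by (apply Nat2Z.inj_lt in Hi; rewrite Z2Nat.id in Hi; lia).
    destruct (- K <=? - K + Z.of_nat i) eqn:E1; [|apply Z.leb_gt in E1; lia].
    destruct (- K + Z.of_nat i <? K) eqn:E2; [|apply Z.ltb_ge in E2; lia]. simpl.
    replace (- K + Z.of_nat i + K) with (Z.of_nat i) by ring. fold L L'. reflexivity. }
  split.
  - rewrite T_lab. simpl. rewrite <- Z.add_assoc, mod_idl. unfold zA. fold K L.
    replace (L + K - Sz (- K) (zbp xs Km m) + (- K + Sz (- K) (zbp xs Km m))) with L by ring.
    apply Z.mod_small, labok.
  - rewrite T_lab. simpl. rewrite <- Z.add_assoc, mod_idl. unfold zA. fold K L.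
    rewrite HS. unfold tm.
    replace (L + K - Sz (- K) (zbp xs Km m) + (K + (Sz (- K) (zbp xs Km m) + (L' - L - 2 * K) mod MM m)))
      with ((L + 2 * K) + (L' - L - 2 * K) mod MM m) by ring.
    rewrite Z.add_mod_idemp_r by apply MM_nz.
    replace (L + 2 * K + (L' - L - 2 * K)) with L' by ring. apply Z.mod_small, labok.
Qed.

Lemma z_lab xs Km m : 0 <= Km m -> (Km m = 0 \/ Z.of_nat m + 1 <= Km m) ->
  (forall k, (Km m <= k \/ k < - Km m) -> Exact xs m k) ->
  forall k, (Km m <= k \/ k <= - Km m) -> lab (iterZ fP gP k (zpt xs Km)) m = lab (xs k) m.
Proof.
  intros H0 H1 HE. destruct (z_labs xs Km m H0 H1) as [Hb Hf].
  assert (F : forall n : nat, lab (iterZ fP gP (Km m + Z.of_nat n) (zpt xs Km)) m = lab (xs (Km m + Z.of_nat n)) m).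
  { induction n. rewrite Z.add_0_r; auto.
    replace (Km m + Z.of_nat (S n)) with ((Km m + Z.of_nat n) + 1) by lia.
    rewrite iterZ_succ. unfold Exact in HE. rewrite (HE (Km m + Z.of_nat n) ltac:(lia)). simpl. rewrite IHn, T_bits.
    change (bits (zpt xs Km)) with (zbp xs Km).
    rewrite Z.add_0_l, zbp_out by lia. reflexivity. }
  assert (Bk : forall n : nat, lab (iterZ fP gP (- Km m - Z.of_nat n) (zpt xs Km)) m = lab (xs (- Km m - Z.of_nat n)) m).
  { induction n. rewrite Z.sub_0_r; auto.
    set (k := - Km m - Z.of_nat (S n)).
    assert (Ek : - Km m - Z.of_nat n = k + 1) by (unfold k; lia).
    rewrite Ek in IHn. rewrite iterZ_succ in IHn. simpl in IHn.
    unfold Exact in HE. rewrite (HE k ltac:(unfold k; lia)) in IHn. rewrite T_bits in IHn.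
    change (bits (zpt xs Km)) with (zbp xs Km) in IHn.
    rewrite zbp_out in IHn by (unfold k; lia). replace (0 + k) with k in IHn by ring.
    rewrite <- Z.add_assoc in IHn. rewrite <- Z.add_assoc in IHn.
    apply mod_back in IHn; [| apply labok].
    rewrite IHn. apply mod_back. apply labok. reflexivity. }
  intros k [Hk|Hk].
  - replace k with (Km m + Z.of_nat (Z.to_nat (k - Km m))) by (rewrite Z2Nat.id; lia). apply F.
  - replace k with (- Km m - Z.of_nat (Z.to_nat (- Km m - k))) by (rewrite Z2Nat.id; lia). apply Bk.
Qed.

Close Scope Z_scope.

Lemma Lshadow : L_shadowing pdist fP gP.
Proof.
  intros eps He. destruct (hp_small eps He) as [N HN]. exists (hp N). split. apply hp_pos.
  intros xs Hd Ht.
  assert (HA : forall k, agree N (fP (xs k)) (xs (k+1)%Z)) by (intro k; apply pdist_le, Hd).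
  assert (Htend : forall l, exists K0, forall k, (K0 <= Z.abs k)%Z -> agree l (fP (xs k)) (xs (k+1)%Z)).
  { intro l. destruct (Ht (hp l) (hp_pos l)) as [K0 HK0]. exists K0. intros k Hk.
    apply HK0 in Hk. rewrite Rabs_pos_eq in Hk by apply pdist_nonneg.
    apply pdist_lt in Hk. apply agree_mono with (S l); auto. }
  assert (HK : exists Kt : nat -> Z, forall m k, (Kt m <= Z.abs k)%Z -> agree (S m) (fP (xs k)) (xs (k+1)%Z)).
  { exists (fun m => proj1_sig (constructive_indefinite_description _ (Htend (S m)))).
    intros m k. destruct constructive_indefinite_description as [K0 HK0]; simpl. apply HK0. }
  destruct HK as [Kt HKt].
  set (Km := fun m => if (m <? N)%nat then 0%Z else Z.max (Z.of_nat m + 1) (Kt m)).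
  assert (HKm0 : forall m, (0 <= Km m)%Z) by (intro m; unfold Km; destruct (m <? N)%nat; lia).
  assert (HKm1 : forall m, (Km m = 0 \/ Z.of_nat m + 1 <= Km m)%Z) by (intro m; unfold Km; destruct (m <? N)%nat; lia).
  assert (HKmN : forall m, (m < N)%nat -> Km m = 0%Z) by (intros m Hm; unfold Km; apply Nat.ltb_lt in Hm; rewrite Hm; auto).
  assert (HE : forall m k, (Km m <= k \/ k < - Km m)%Z -> Exact xs m k).
  { intros m k Hk. destruct (Nat.lt_ge_cases m N) as [Hm|Hm].
    - apply exact_of with N; auto.
    - apply exact_of with (S m); auto. apply HKt. unfold Km in Hk.
      apply Nat.ltb_ge in Hm. rewrite Hm in Hk. lia. }
  set (z := zpt xs Km).
  assert (Hlab : forall m k, (Km m <= k \/ k <= - Km m)%Z -> lab (iterZ fP gP k z) m = lab (xs k) m).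
  { intros m. apply z_lab; auto. }
  assert (Hbit : forall m k j, bits (iterZ fP gP k z) m j = zbp xs Km m (j + k)).
  { intros. rewrite T_bits. reflexivity. }
  exists z. split.
  - intro k. assert (pdist (iterZ fP gP k z) (xs k) <= hp N)%R; [|lra]. apply pdist_le.
    apply agree_intro.
    + intros m Hm. apply Hlab. rewrite HKmN by auto. lia.
    + intros m j Hm Hj. rewrite Hbit, zbp_out by (rewrite HKmN by auto; lia).
      rewrite Z.add_comm. apply chain with N; auto; intros; apply HA.
  - intros e Hee. destruct (hp_small e Hee) as [n Hn].
    destruct (Htend n) as [K1 HK1].
    assert (HB : exists B, forall m, (m < n)%nat -> (Km m <= B)%Z).
    { clear. induction n. exists 0%Z; intros; lia.
      destruct IHn as [B HB]. exists (Z.max B (Km n)). intros m Hm.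
      destruct (Nat.lt_ge_cases m n). specialize (HB m H); lia. replace m with n by lia. lia. }
    destruct HB as [B HB].
    exists (Z.max K1 B + Z.of_nat n)%Z. intros k Hk.
    rewrite Rabs_pos_eq by apply pdist_nonneg.
    assert (pdist (iterZ fP gP k z) (xs k) <= hp n)%R; [|lra]. apply pdist_le. apply agree_intro.
    + intros m Hm. apply Hlab. specialize (HB m Hm). lia.
    + intros m j Hm Hj. specialize (HB m Hm). rewrite Hbit, zbp_out by lia.
      rewrite Z.add_comm. apply chain with n; auto; intros i Hi; apply HK1; lia.
Qed.


Theorem theoremC :
  exists (X : Type) (d : X -> X -> R) (f g : X -> X),
    is_metric d /\ compact_metric d /\ inhabited X /\
    homeomorphism d f g /\
    topologically_mixing d f /\
    L_shadowing d f g /\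
    no_periodic_points f.
Proof.
  exists P, pdist, fP, gP.
  split. apply pdist_metric.
  split. apply compact.
  split. exact (inhabits pt0).
  split. apply homeo.
  split. apply mixing.
  split. apply Lshadow.
  apply nopp.
Qed.
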